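(* Let $n\ge 2$ and let $\Lambda_n$ be a cycle ordering of the chains of a symmetric chain decomposition of $Q_n$. Then in the corresponding Hamilton cycle, any two chains $C$ and $C'$ with $|C|\equiv|C'|\pmod 4$ are traversed in the same direction (both upwards or both downwards).
   Context: $Q_n$ is the hypercube on $\{0,1\}^n$; level $k$ is the set of strings with $k$ ones. A symmetric chain is a path $(x_k,\ldots,x_{n-k})$ in $Q_n$ with $x_i$ in level $i$; a symmetric chain decomposition (SCD) is a partition of the vertices of $Q_n$ into symmetric chains. The length $|C|$ of a chain is its number of edges; its bottom end is its vertex in the lowest level and its top end its vertex in the highest level. A cycle ordering of the chains of an SCD is a cyclic ordering of all its chains such that the chains together with, for each pair of cyclically consecutive chains, one connecting edge of $Q_n$ form a Hamilton cycle, where the connecting edges join consecutive chains alternately at their top ends and at their bottom ends, with the exception that two consecutive chains of length $1$ are joined by an edge from the bottom end of one of them to the top end of the other. *)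

(* Defs.v *)
From mathcomp Require Import all_boot.
Set Implicit Arguments. Unset Strict Implicit. Unset Printing Implicit Defensive.

Definition vertex (n : nat) := {ffun 'I_n -> bool}.

Definition vzero (n : nat) : vertex n := [ffun => false].

Definition level (n : nat) (x : vertex n) : nat := #|[pred i | x i]|.

Definition qadj (n : nat) (x y : vertex n) : bool := #|[pred i | x i != y i]| == 1.

(* A chain is listed from its bottom end to its top end. *)
Definition chain (n : nat) := seq (vertex n).

Definition sym_chain (n : nat) (c : chain n) : Prop :=
  exists k, [/\ 2 * k <= n, size c = (n - 2 * k).+1,
    (forall i, i < size c -> level (nth (vzero n) c i) = k + i) &
    (forall i, i.+1 < size c -> qadj (nth (vzero n) c i) (nth (vzero n) c i.+1))].

Definition clen (n : nat) (c : chain n) : nat := (size c).-1.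
Definition cbot (n : nat) (c : chain n) : vertex n := head (vzero n) c.
Definition ctop (n : nat) (c : chain n) : vertex n := last (vzero n) c.

Definition SCD (n : nat) (S : seq (chain n)) : Prop :=
  (forall c, c \in S -> sym_chain c) /\
  (forall x : vertex n, count_mem x (flatten S) = 1).

(* Traversal direction: [true] = upwards (enter at bottom end, leave at top end),
   [false] = downwards. *)
Definition cstart (n : nat) (c : chain n) (up : bool) := if up then cbot c else ctop c.
Definition cend (n : nat) (c : chain n) (up : bool) := if up then ctop c else cbot c.

(* A cycle ordering of the chains of the SCD [S]: the cyclic sequence [L] of all
   chains of [S] (the list order fixes an orientation of the cycle), together
   with the direction [d`_i] in which the resulting Hamilton cycle traverses the
   chain [L`_i].  Edges join consecutive chains at their top ends or at
   their bottom ends, alternately (so the direction flips), except that two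
   consecutive chains of length 1 are joined bottom end to top end (so the
   direction is kept). *)
Definition cycle_ordering (n : nat) (S : seq (chain n)) (L : seq (chain n))
    (d : seq bool) : Prop :=
  [/\ perm_eq L S, size d = size L &
    forall i, i < size L ->
      let j := i.+1 %% size L in
      let C := nth [::] L i in let C' := nth [::] L j in
      let u := nth false d i in let u' := nth false d j in
      qadj (cend C u) (cstart C' u') /\
      (if (clen C == 1) && (clen C' == 1) then u' = u else u' = ~~ u)].

(* Main.v *)
Require Import Defs.
From mathcomp Require Import all_boot zify.
Set Implicit Arguments. Unset Strict Implicit.
Lemma edge n (x y : vertex n) : qadj x y -> (level x + level y) %% 2 = 1.
Proof.
rewrite /level /qadj => /eqP H.
have C : forall P : pred 'I_n, #|[pred i | P i]| = \sum_i (P i : nat).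
  move=> P; rewrite -sum1_card big_mkcond /=; apply: eq_bigr => i _.
  by rewrite inE; case: (P i).
have E : #|[pred i | x i]| + #|[pred i | y i]| =
   #|[pred i | x i != y i]| + 2 * #|[pred i | x i && y i]|.
  rewrite !C -big_split /= big_distrr -big_split /=; apply: eq_bigr => i _.
  by case: (x i); case: (y i).
rewrite E H; lia.
Qed.
Lemma chain_facts n (c : chain n) : sym_chain c ->
  exists k, [/\ 2*k <= n, clen c = n - 2*k, level (cbot c) = k & level (ctop c) = k + (n - 2*k)].
Proof.
case=> k [hk hs hl _]; exists k; split => //.
- by rewrite /clen hs.
- by rewrite /cbot -nth0 hl ?hs // addn0.
- by rewrite /ctop -nth_last hl hs.
Qed.

Section Main.
Variables (n : nat) (S L : seq (chain n)) (d : seq bool).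
Hypothesis hS : SCD S.
Hypothesis hL : cycle_ordering S L d.

Definition g i := (nth false d i + level (ctop (nth [::] L i))) %% 2.

Lemma symL i : i < size L -> sym_chain (nth [::] L i).
Proof.
move=> hi; case: hS => hc _; apply: hc; case: hL => hp _ _.
by rewrite -(perm_mem hp) mem_nth.
Qed.

Lemma step i : i.+1 < size L -> g i.+1 = g i.
Proof.
move=> hi; case: hL => _ _ H0; move: (H0 i (ltnW hi)) => /=.
rewrite (modn_small hi) /g.
have [k [hk hl hb ht]] := chain_facts (symL (ltnW hi)).
have [k' [hk' hl' hb' ht']] := chain_facts (symL hi).
move: hl hb ht hl' hb' ht'.
set C := nth [::] L i; set C' := nth [::] L i.+1.
set u := nth false d i; set u' := nth false d i.+1.
move=> hl hb ht hl' hb' ht' [/edge].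
case: u; case: u'; rewrite /cend /cstart /=;
  case: ifP => [/andP[/eqP c1 /eqP c2]|_] E => // H; lia.
Qed.

Lemma gconst i : i < size L -> g i = g 0.
Proof.
elim: i => // i IH hi; rewrite step // IH // ltnW //.
Qed.

End Main.

Theorem lemma16 (n : nat) (S L : seq (chain n)) (d : seq bool) :
  2 <= n -> SCD S -> cycle_ordering S L d ->
  forall i j, i < size L -> j < size L ->
    clen (nth [::] L i) = clen (nth [::] L j) %[mod 4] ->
    nth false d i = nth false d j.
Proof.
move=> _ hS hL i j hi hj hm.
have gi := gconst hS hL hi; have gj := gconst hS hL hj.
move: gi gj; rewrite /g.
have [k [hk hl hb ht]] := chain_facts (symL hS hL hi).
have [k' [hk' hl' hb' ht']] := chain_facts (symL hS hL hj).
rewrite ht ht'; move: hm; rewrite hl hl'.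
case: (nth false d i); case: (nth false d j) => //= *; lia.
Qed.
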